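(* Let $N\ge1$, let $J(x)$ be an $N\times N$ matrix whose entries are linear forms in $x\in\mathbb R^N$, let $H(x)=\tfrac12x^T\mathcal Hx$ be a quadratic form with constant symmetric $\mathcal H$, and let $f(x)=J(x)\nabla H(x)$. Let $\tilde x=\Phi_f(x,\varepsilon)$ be the Kahan map of $f$, and suppose $I-\varepsilon f'(x)$ and $I-\varepsilon J(x)\mathcal H$ are invertible. Then $$\tilde x-x=2\varepsilon\big(I-\varepsilon J(x)\mathcal H\big)^{-1}J\Big(\tfrac{x+\tilde x}{2}\Big)\nabla H(x),$$ and equivalently $$\tilde x=\big(I-\varepsilon J(x)\mathcal H\big)^{-1}\big(I+\varepsilon J(\tilde x)\mathcal H\big)x.$$
   Context: Kahan map: for a vector field $f$ on $\mathbb R^N$ whose components are homogeneous quadratic polynomials and a parameter $\varepsilon$, the Kahan map is $\Phi_f(x,\varepsilon)=\tilde x=x+2\varepsilon(I-\varepsilon f'(x))^{-1}f(x)=(I-\varepsilon f'(x))^{-1}x$, where $f'(x)$ is the Jacobi matrix of $f$ (defined wherever $I-\varepsilon f'(x)$ is invertible); it is the solution $\tilde x$ of $\frac{\tilde x-x}{2\varepsilon}=2f(\frac{x+\tilde x}{2})-\frac12f(x)-\frac12 f(\tilde x)$. *)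

(* Defs.v *)
From HB Require Import structures.
From mathcomp Require Import all_boot all_order all_algebra.
Set Implicit Arguments. Unset Strict Implicit. Unset Printing Implicit Defensive.
Import Order.TTheory GRing.Theory Num.Theory.
Local Open Scope ring_scope.

(* A homogeneous quadratic vector field f(x) = B(x,x) given by a bilinear map
   B (bilinearity is used only through the concrete B built below). *)

Definition basis_vec (R : nzRingType) {N : nat} (j : 'I_N) : 'cV[R]_N :=
  delta_mx j ord0.

(* Jacobi matrix of x |-> B x x : entry (i,j) = d/dx_j (B x x)_i
   = (B x e_j + B e_j x)_i. *)
Definition quad_jac (R : nzRingType) (N : nat)
  (B : 'cV[R]_N -> 'cV[R]_N -> 'cV[R]_N) (x : 'cV[R]_N) : 'M[R]_N :=
  \matrix_(i < N, j < N) (B x (basis_vec R j) + B (basis_vec R j) x) i ord0.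

Definition kahan (R : fieldType) (N : nat)
  (B : 'cV[R]_N -> 'cV[R]_N -> 'cV[R]_N) (eps : R) (x : 'cV[R]_N) : 'cV[R]_N :=
  invmx (1%:M - eps *: quad_jac B x) *m x.

Definition linJ (R : nzRingType) (N : nat) (Jk : 'I_N -> 'M[R]_N)
  (x : 'cV[R]_N) : 'M[R]_N :=
  \sum_(k < N) x k ord0 *: Jk k.

(* Bilinear map for f(x) = J(x) (Hm x) = J(x) grad H(x), H(x) = x^T Hm x / 2. *)
Definition poissonB (R : nzRingType) (N : nat) (Jk : 'I_N -> 'M[R]_N)
  (Hm : 'M[R]_N) (u v : 'cV[R]_N) : 'cV[R]_N :=
  linJ Jk u *m (Hm *m v).

(* Main.v *)
Require Import Defs.
From HB Require Import structures.
From mathcomp Require Import all_boot all_order all_algebra.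
Import Order.TTheory GRing.Theory Num.Theory.
Local Open Scope ring_scope.

Section S.
Variables (R : fieldType) (N : nat) (Jk : 'I_N -> 'M[R]_N) (Hm : 'M[R]_N).

Lemma linJ_e j : linJ Jk (basis_vec R j) = Jk j.
Proof.
rewrite /linJ (bigD1 j) //= big1 => [|k kj].
  by rewrite /basis_vec mxE !eqxx scale1r addr0.
by rewrite /basis_vec mxE (negbTE kj) scale0r.
Qed.

Lemma linJD a u v : linJ Jk (a *: u + v) = a *: linJ Jk u + linJ Jk v.
Proof.
rewrite /linJ scaler_sumr -big_split; apply: eq_bigr => k _.
by rewrite !mxE scalerDl scalerA.
Qed.

Lemma linJ_mul v (w : 'cV[R]_N) : linJ Jk v *m w = \sum_k v k ord0 *: (Jk k *m w).
Proof. by rewrite /linJ mulmx_suml; apply: eq_bigr => k _; rewrite scalemxAl. Qed.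

Definition Kmx (w : 'cV[R]_N) : 'M[R]_N := \matrix_(i, j) (Jk j *m w) i ord0.

Lemma Kmx_mul w v : Kmx w *m v = linJ Jk v *m w.
Proof.
apply/matrixP => i k; rewrite (ord1 k) linJ_mul !mxE summxE.
by apply: eq_bigr => j _; rewrite !mxE mulrC.
Qed.

Lemma quad_jacE x : quad_jac (poissonB Jk Hm) x = linJ Jk x *m Hm + Kmx (Hm *m x).
Proof.
apply/matrixP => i j; rewrite !mxE /poissonB linJ_e.
by congr (_ + _); apply: eq_bigr => k _; rewrite /basis_vec -colE mxE.
Qed.

Lemma linJZ a u : linJ Jk (a *: u) = a *: linJ Jk u.
Proof.
rewrite /linJ scaler_sumr; apply: eq_bigr => k _; by rewrite !mxE scalerA.
Qed.

Lemma linJ_add u v : linJ Jk (u + v) = linJ Jk u + linJ Jk v.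
Proof.
rewrite /linJ -big_split; apply: eq_bigr => k _; by rewrite !mxE scalerDl.
Qed.
End S.

Theorem mainTheorem8 (R : realFieldType) (N : nat) (hN : (0 < N)%N)
  (Jk : 'I_N -> 'M[R]_N) (Hm : 'M[R]_N) (hsym : Hm^T = Hm)
  (eps : R) (x : 'cV[R]_N)
  (h1 : (1%:M - eps *: quad_jac (poissonB Jk Hm) x) \in unitmx)
  (h2 : (1%:M - eps *: (linJ Jk x *m Hm)) \in unitmx) :
  let xt := kahan (poissonB Jk Hm) eps x in
  xt - x = (2 * eps) *: (invmx (1%:M - eps *: (linJ Jk x *m Hm))
                          *m linJ Jk (2^-1 *: (x + xt)) *m (Hm *m x))
  /\ xt = invmx (1%:M - eps *: (linJ Jk x *m Hm))
          *m (1%:M + eps *: (linJ Jk xt *m Hm)) *m x.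
Proof.
move=> xt.
have E : (1%:M - eps *: (linJ Jk x *m Hm)) *m xt
         = (1%:M + eps *: (linJ Jk xt *m Hm)) *m x.
  have : (1%:M - eps *: quad_jac (poissonB Jk Hm) x) *m xt = x.
    by rewrite /xt /kahan mulmxA mulmxV // mul1mx.
  rewrite quad_jacE scalerDr opprD addrA mulmxBl -scalemxAl Kmx_mul.
  move=> hx; rewrite [RHS]mulmxDl mul1mx -scalemxAl -mulmxA.
  by rewrite -[X in _ = X + _]hx subrK.
have E2 : xt = invmx (1%:M - eps *: (linJ Jk x *m Hm))
          *m (1%:M + eps *: (linJ Jk xt *m Hm)) *m x.
  by rewrite -mulmxA -E mulmxA mulVmx // mul1mx.
split; last exact: E2.
have Hx : invmx (1%:M - eps *: (linJ Jk x *m Hm)) *m ((1%:M - eps *: (linJ Jk x *m Hm)) *m x) = x.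
  by rewrite mulmxA mulVmx // mul1mx.
rewrite {1}E2 -[X in _ - X = _]Hx -mulmxA -mulmxBr -mulmxBl.
rewrite linJZ linJ_add -!mulmxA [RHS]scalemxAr; congr (_ *m _).
rewrite [RHS]scalemxAl scalerA mulmxA; congr (_ *m _).
have -> : 2 * eps / 2 = eps :> R.
  by rewrite mulrAC divff ?mul1r // pnatr_eq0.
rewrite -scalemxAl mulmxDl scalerDr opprB addrC addrA subrK.
by [].
Qed.
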